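(* Let $i,n$ be natural numbers and let $A$ be a brace of cardinality $p^n$, where $p$ is a prime with $p>n+1$. Let $I$ be an ideal of $A$. Then $p^iI=\{p^ia: a\in I\}$ is an ideal of $A$.
   Context: A (left) brace is a set $A$ with binary operations $+,\circ$ such that $(A,+)$ is an abelian group, $(A,\circ)$ is a group, and $a\circ(b+c)+a=a\circ b+a\circ c$ for all $a,b,c$. Write $a*b=a\circ b-a-b$. An ideal of a brace $A$ is a subgroup $I$ of $(A,+)$ which is a normal subgroup of $(A,\circ)$ and satisfies $a*x\in I$ for all $a\in A$, $x\in I$; equivalently, an additive subgroup $I$ with $A*I\subseteq I$ and $I*A\subseteq I$. $p^ia$ denotes the $p^i$-fold additive multiple of $a$. *)

(* Defs.v *)
From mathcomp Require Import all_boot all_algebra.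
Set Implicit Arguments. Unset Strict Implicit. Unset Printing Implicit Defensive.
Import GRing.Theory.
Local Open Scope ring_scope.

Definition is_group (T : Type) (op : T -> T -> T) : Prop :=
  (forall x y z, op x (op y z) = op (op x y) z) /\
  exists e : T, (forall x, op e x = x /\ op x e = x) /\
                (forall x, exists y, op x y = e /\ op y x = e).

Definition is_brace (A : zmodType) (circ : A -> A -> A) : Prop :=
  is_group circ /\
  forall a b c : A, circ a (b + c) + a = circ a b + circ a c.

Definition bstar (A : zmodType) (circ : A -> A -> A) (a b : A) : A :=
  circ a b - a - b.

Definition is_ideal (A : finZmodType) (circ : A -> A -> A) (I : {set A}) : Prop :=
  [/\ 0 \in I,
      (forall x y, x \in I -> y \in I -> x - y \in I),
      (forall a x, x \in I -> bstar circ a x \in I) &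
      (forall x a, x \in I -> bstar circ x a \in I)].

(* Main.v *)
Require Import Defs.
From HB Require Import structures.
From mathcomp Require Import all_boot all_order all_algebra all_fingroup all_solvable.
Set Implicit Arguments. Unset Strict Implicit. Unset Printing Implicit Defensive.
Import GRing.Theory.
Local Open Scope ring_scope.

Section Brace.
Variables (A : finZmodType) (circ : A -> A -> A).
Hypothesis hA : is_brace circ.

Definition lam (a x : A) := circ a x - a.

Lemma circA x y z : circ x (circ y z) = circ (circ x y) z.
Proof. by case: hA => [[]]. Qed.

Lemma lamD a x y : lam a (x + y) = lam a x + lam a y.
Proof.
case: hA => _ h; rewrite /lam.
have -> : circ a (x + y) = circ a x + circ a y - a by rewrite -h addrK.
by rewrite addrACA !addrA.
Qed.

Lemma lam0 a : lam a 0 = 0.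
Proof. have h := lamD a 0 0; rewrite addr0 in h. by apply: (addrI (lam a 0)); rewrite addr0 -h. Qed.

Lemma lamN a x : lam a (- x) = - lam a x.
Proof. by apply/eqP; rewrite -addr_eq0 -lamD addNr lam0. Qed.

Lemma lamB a x y : lam a (x - y) = lam a x - lam a y.
Proof. by rewrite lamD lamN. Qed.

Lemma lamMn a x m : lam a (x *+ m) = lam a x *+ m.
Proof. by elim: m => [|m IH]; rewrite ?lam0 // !mulrS lamD IH. Qed.

Lemma circ0x : forall x, circ 0 x = x /\ circ x 0 = x.
Proof.
case: hA => [[_ [e [he _]]] h].
have ex0 : forall x, circ x 0 = x.
  move=> x; have := h x 0 0; rewrite addr0 => /eqP; rewrite addrC -subr_eq addrK.
  by move/eqP.
have e0 : e = 0 by have [<- _] := he 0; rewrite ex0.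
by move=> x; split; [have [] := he x; rewrite e0 | apply: ex0].
Qed.

Lemma lam0x x : lam 0 x = x.
Proof. by rewrite /lam (circ0x x).1 subr0. Qed.

Lemma lamM a b x : lam (circ a b) x = lam a (lam b x).
Proof.
rewrite [LHS]/lam -circA [lam b x]/lam lamB /lam.
by rewrite opprB addrA subrK.
Qed.

Lemma cinv_ex x : exists y, circ x y = 0 /\ circ y x = 0.
Proof.
case: hA => [[_ [e [he hi]]] h].
have e0 : e = 0 by have [_ <-] := he 0; rewrite (circ0x e).1.
by rewrite -e0; apply: hi.
Qed.

Lemma bstarE a x : bstar circ a x = lam a x - x.
Proof. by rewrite /bstar /lam. Qed.

Lemma bstarD a x y : bstar circ a (x + y) = bstar circ a x + bstar circ a y.
Proof. by rewrite !bstarE lamD opprD addrACA. Qed.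

End Brace.

Local Close Scope ring_scope.

Definition ctype (A : finZmodType) (circ : A -> A -> A) (h : is_brace circ) : Type := A.
HB.instance Definition _ (A : finZmodType) circ h := Finite.copy (@ctype A circ h) A.

Definition cinv (A : finZmodType) (circ : A -> A -> A) (x : A) : A :=
  odflt 0%R [pick y | (circ x y == 0%R) && (circ y x == 0%R)].

Lemma cinvP (A : finZmodType) (circ : A -> A -> A) (h : is_brace circ) x :
  circ x (cinv circ x) = 0%R /\ circ (cinv circ x) x = 0%R.
Proof.
rewrite /cinv; case: pickP => [y /andP[/eqP -> /eqP ->] //|H].
have [y [h1 h2]] := cinv_ex h x.
by have := H y; rewrite h1 h2 !eqxx.
Qed.

Section G.
Variables (A : finZmodType) (circ : A -> A -> A) (h : is_brace circ).
Definition cmul (x y : ctype h) : ctype h := circ y x.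
Lemma cmulA : associative cmul.
Proof. by move=> x y z; rewrite /cmul circA. Qed.
Lemma cmul1 : left_id (0%R : ctype h) cmul.
Proof. by move=> x; rewrite /cmul (circ0x h x).2. Qed.
Lemma cmulV : left_inverse (0%R : ctype h) (cinv circ) cmul.
Proof. by move=> x; rewrite /cmul (cinvP h x).1. Qed.
End G.

HB.instance Definition _ (A : finZmodType) circ h :=
  Finite_isGroup.Build (@ctype A circ h) (@cmulA A circ h) (@cmul1 A circ h) (@cmulV A circ h).

Section Act.
Variables (A : finZmodType) (circ : A -> A -> A) (h : is_brace circ).
Definition cto (x : A) (g : ctype h) : A := lam circ g x.
Lemma cto1 : cto^~ 1%g =1 id.
Proof. by move=> x; rewrite /cto lam0x. Qed.
Lemma ctoM x : act_morph cto x.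
Proof. by move=> a b; rewrite /cto /= /mulg /= /cmul lamM. Qed.
Definition caction := TotalAction cto1 ctoM.
Lemma card_ctype : #|{: ctype h}| = #|{: A}|.
Proof. by []. Qed.
End Act.


Local Open Scope group_scope.
Section Fix.
Variables (A : finZmodType) (circ : A -> A -> A) (h : is_brace circ).
Variables (p n : nat) (pp : prime p) (hcard : #|A| = (p ^ n)%N).

Lemma ctoE x g : caction h x g = lam circ g x. Proof. by []. Qed.

Lemma mem_rcosetA (B : {group A}) x y : (y \in B :* x) = ((y - x)%R \in B).
Proof. by rewrite mem_rcoset. Qed.

Lemma fixcoset (B : {group A}) :
  (forall (g : A) x, x \in B -> lam circ g x \in B) -> ~~ ([set: A] \subset B) ->
  exists2 v, v \notin B & forall g, bstar circ g v \in B.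
Proof.
move=> Binv nB.
pose to := caction h.
have pG : p.-group [set: ctype h].
  by rewrite /pgroup cardsT card_ctype hcard pnatX pnat_id.
set S := rcosets B [set: A].
have fw : forall (g : ctype h) C, C \in S -> (to^* C g)%act \in S.
  move=> g C /rcosetsP[x _ ->].
  have -> : (to^* (B :* x) g)%act = B :* (lam circ g x).
    apply/setP => y; rewrite /= setactE; apply/imsetP/idP.
      case=> z; rewrite mem_rcosetA => zB ->.
      by rewrite mem_rcosetA ctoE -(lamB h) Binv.
    rewrite mem_rcosetA => yB.
    exists (to y g^-1)%g; last by rewrite actKV.
    rewrite mem_rcosetA (_ : x = to (to x g) g^-1); last by rewrite actK.
    rewrite /cto -(lamB h).
    exact: Binv.
  by apply/rcosetsP; exists (lam circ g x); rewrite ?inE.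
have actsS : [acts [set: ctype h], on S | to^*].
  apply/actsP => g _ C; apply/idP/idP => [|/fw //].
  by move=> /(fw g^-1); rewrite actK.
have := pgroup_fix_mod pG actsS.
have pS : (p %| #|S|)%N.
  have : (#|S| %| p ^ n)%N by rewrite -hcard -cardsT dvdn_indexg.
  case/dvdn_pfactor => // [[|m]] _ Sm.
    by move: nB; rewrite -indexg_eq1 /indexg -/S Sm.
  by rewrite Sm expnS dvdn_mulr.
set F := 'Fix_(S | to^*)([set: ctype h]).
have BF : (B : {set A}) \in F.
  rewrite inE; apply/andP; split.
    by apply/rcosetsP; exists 0%R; rewrite ?inE // rcoset1.
  apply/afixP => g _.
  apply/eqP; rewrite eqEcard; apply/andP; split.
    rewrite /= setactE; apply/subsetP => y /imsetP[z zB ->]; exact: Binv.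
  by rewrite /= setactE card_imset //; apply: act_inj.
move=> eqS; have pF : (p %| #|F|)%N by move: pS; rewrite /dvdn eqS.
have : (0 < #|F :\ (B : {set A})|)%N.
  have := cardsD1 (B : {set A}) F; rewrite BF /= => eF.
  rewrite lt0n; apply/negP => /eqP e0; move: pF; rewrite eF e0 /= dvdn1 => /eqP p1.
  by move: (prime_gt1 pp); rewrite p1.
rewrite card_gt0 => /set0Pn [C] /setD1P [CB /setIP[CS /afixP Cfix]].
move: CS => /rcosetsP[v _ Cv].
exists v.
  apply: contra CB => vB; by rewrite Cv rcoset_id.
move=> g; rewrite (_ : bstar circ g v = (lam circ g v - v)%R) // -mem_rcosetA -Cv.
rewrite -(Cfix (g : ctype h)) ?inE // /= setactE.
by apply/imsetP; exists v => //; rewrite Cv rcoset_refl.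
Qed.
End Fix.



Section Series.
Variables (A : finZmodType) (circ : A -> A -> A) (h : is_brace circ).

Fixpoint Bs (k : nat) : {set A} :=
  if k is k'.+1 then [set v | [forall a, bstar circ a v \in Bs k']] else [set 0%R].

Lemma bstar0 a : bstar circ a 0%R = 0%R.
Proof. by rewrite bstarE (lam0 h) subrr. Qed.

Lemma Bs0 k : (0%R : A) \in Bs k.
Proof.
elim: k => [|k IH] /=; rewrite !inE //; apply/forallP => a; by rewrite bstar0.
Qed.

Lemma BsD k x y : x \in Bs k -> y \in Bs k -> (x + y)%R \in Bs k.
Proof.
elim: k x y => [|k IH] x y /=; rewrite !inE.
  by move=> /eqP -> /eqP ->; rewrite addr0.
move=> /forallP hx /forallP hy; apply/forallP => a.
by rewrite (bstarD h) IH.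
Qed.

Lemma Bs_mono k : Bs k \subset Bs k.+1.
Proof.
elim: k => [|k IH]; apply/subsetP => x.
  by rewrite !inE => /eqP ->; apply/forallP => a; rewrite bstar0 inE.
rewrite [x \in Bs k.+1]inE => /forallP hx.
rewrite inE; apply/forallP => a; exact: (subsetP IH).
Qed.

Lemma Bs_star k a x : x \in Bs k -> bstar circ a x \in Bs k.
Proof.
case: k => [|k].
  by rewrite /= !inE => /eqP ->; rewrite bstar0.
move=> hx; apply: (subsetP (Bs_mono k)); move: hx; rewrite /= inE => /forallP; apply.
Qed.

Lemma Bs_lam k a x : x \in Bs k -> lam circ a x \in Bs k.
Proof.
move=> xB; have -> : lam circ a x = (x + bstar circ a x)%R.
  by rewrite bstarE addrC subrK.
by rewrite BsD // Bs_star.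
Qed.

Lemma Bs_gs k : group_set (Bs k).
Proof. apply/group_setP; split; [exact: Bs0 | move=> x y; exact: BsD]. Qed.

Canonical Bs_group k := group (Bs_gs k).

Variables (p n : nat) (pp : prime p) (hcard : #|A| = (p ^ n)%N).

Lemma Bs_size k : Bs k = [set: A] \/ (p ^ k <= #|Bs k|)%N.
Proof.
elim: k => [|k [IH|IH]].
  by right; rewrite cards1.
  left; apply/eqP; rewrite eqEsubset subsetT /= -IH; exact: Bs_mono.
case: (boolP ([set: A] \subset Bs k)) => [sT|nT].
  left; apply/eqP; rewrite eqEsubset subsetT /=; apply: subset_trans sT (Bs_mono k).
have [v vB vfix] := fixcoset h pp hcard (B := Bs_group k) (@Bs_lam k) nT.
right.
have vB1 : v \in Bs k.+1 by rewrite /= inE; apply/forallP.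
have sub : Bs_group k \subset Bs_group k.+1 by exact: Bs_mono.
have := Lagrange sub => eL.
have : (#|Bs_group k.+1 : Bs_group k| %| p ^ n)%N.
  rewrite -hcard; apply: dvdn_trans (dvdn_indexg _ _) _.
  by rewrite -cardsT; apply: cardSg; apply: subsetT.
case/dvdn_pfactor => // [[|m]] _ em.
  move/eqP: em; rewrite indexg_eq1 => /subsetP/(_ v vB1); by rewrite (negPf vB).
have -> : #|Bs k.+1| = (#|Bs_group k| * p ^ m.+1)%N by rewrite -em eL.
rewrite expnSr leq_mul //.
by rewrite expnS -{1}(muln1 p) leq_mul // expn_gt0 prime_gt0.
Qed.

Lemma Bs_n : Bs n = [set: A].
Proof.
case: (Bs_size n) => // le; apply/eqP; rewrite eqEcard subsetT /= cardsT hcard //.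
Qed.

Lemma Bs_ge m x : (n <= m)%N -> x \in Bs m.
Proof.
move=> /subnK <-; elim: (m - n)%N => [|k IH]; first by rewrite add0n Bs_n inE.
by rewrite addSn; apply: (subsetP (Bs_mono _)).
Qed.

Lemma iter_Bs k y x : x \in Bs k -> iter k (bstar circ y) x = 0%R.
Proof.
elim: k x => [|k IH] x; first by rewrite inE => /eqP.
move=> hx; rewrite iterSr; apply: IH; move: hx; rewrite /= inE => /forallP; apply.
Qed.

Lemma iter_n m y x : (n <= m)%N -> iter m (bstar circ y) x = 0%R.
Proof. by move=> le; apply: iter_Bs; apply: Bs_ge. Qed.
End Series.

Local Close Scope group_scope.
Local Open Scope ring_scope.

Section Sums.
Variables (A : finZmodType) (circ : A -> A -> A) (h : is_brace circ).

Lemma bstarMn a x m : bstar circ a (x *+ m) = bstar circ a x *+ m.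
Proof. by elim: m => [|m IH]; rewrite ?bstar0 // !mulrS (bstarD h) IH. Qed.

Lemma bstar_sum a I (r : seq I) (P : pred I) (F : I -> A) :
  bstar circ a (\sum_(i <- r | P i) F i) = \sum_(i <- r | P i) bstar circ a (F i).
Proof. exact: (big_morph _ (bstarD h a) (bstar0 h a)). Qed.

Lemma lam_sum a I (r : seq I) (P : pred I) (F : I -> A) :
  lam circ a (\sum_(i <- r | P i) F i) = \sum_(i <- r | P i) lam circ a (F i).
Proof. exact: (big_morph _ (lamD h a) (lam0 h a)). Qed.

Definition S (y : A) N (c : nat -> nat) (u : A) :=
  \sum_(k < N) iter k (bstar circ y) u *+ c k.

Lemma lamE a x : lam circ a x = x + bstar circ a x.
Proof. by rewrite bstarE addrC subrK. Qed.

Lemma S_step y N c u : c N = 0%N ->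
  lam circ y (S y N.+1 c u) =
  S y N.+1 (fun k => (c k + (if k is k'.+1 then c k' else 0))%N) u.
Proof.
move=> cN; rewrite lamE /S.
rewrite [in RHS](eq_bigr (fun k : 'I_N.+1 => iter k (bstar circ y) u *+ c k +
   iter k (bstar circ y) u *+ (if val k is k'.+1 then c k' else 0%N))); last first.
  by move=> k _; rewrite mulrnDr.
rewrite [RHS]big_split /= bstar_sum; congr (_ + _).
rewrite big_ord_recr /= cN mulr0n (bstar0 h) addr0 big_ord_recl /= mulr0n add0r.
apply: eq_bigr => k _; by rewrite bstarMn.
Qed.

Lemma binom y N m u : (m <= N)%N ->
  iter m (lam circ y) u = S y N.+1 (fun k => 'C(m, k)) u.
Proof.
elim: m => [|m IH] le.
  rewrite /S big_ord_recl /= mulr1n big1 ?addr0 // => k _; by rewrite bin0n mulr0n.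
rewrite iterS IH ?(ltnW le) // S_step ?bin_small //.
by apply: eq_bigr => -[[|k] hk] _ /=; rewrite ?bin0 ?binS // addn0.
Qed.

Definition cpow (y : A) m := iter m (circ y) 0.

Lemma lam_cpow y m x : lam circ (cpow y m) x = iter m (lam circ y) x.
Proof.
elim: m => [|m IH] /=; first by rewrite (lam0x h).
by rewrite (lamM h) IH.
Qed.

Lemma cpowS y m : cpow y m.+1 = y + lam circ y (cpow y m).
Proof. by rewrite /cpow iterS /lam addrC subrK. Qed.

Lemma cpowE y N m : (m <= N)%N -> cpow y m = S y N.+1 (fun k => 'C(m, k.+1)) y.
Proof.
elim: m => [|m IH] le.
  by rewrite /S big1 // => k _; rewrite bin0n mulr0n.
rewrite cpowS IH ?(ltnW le) // S_step ?bin_small ?ltnS //.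
rewrite /S !big_ord_recl /= addrA; congr (_ + _).
  by rewrite !bin1 addn0 mulrS.
exact: ltnW le.
Qed.
End Sums.



Section Main.
Variables (A : finZmodType) (circ : A -> A -> A) (h : is_brace circ).
Variables (p n : nat) (pp : prime p) (hcard : #|A| = (p ^ n)%N) (hpn : (n.+1 < p)%N).

Definition pM (X : pred A) (z : A) := exists2 w, X w & z = w *+ p.

Definition addcl (X : pred A) := X 0 /\ forall x y, X x -> X y -> X (x + y).

Lemma pM0 X : addcl X -> pM X 0.
Proof. by case=> X0 _; exists 0 => //; rewrite mul0rn. Qed.

Lemma pMD X a b : addcl X -> pM X a -> pM X b -> pM X (a + b).
Proof.
case=> _ XD [w Xw ->] [v Xv ->]; exists (w + v); [exact: XD | by rewrite mulrnDl].
Qed.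

Lemma pM_sum X N (F : 'I_N -> A) : addcl X -> (forall k, pM X (F k)) ->
  pM X (\sum_(k < N) F k).
Proof.
move=> hX hF; apply: (big_ind (pM X)) => //; [exact: pM0 | move=> x y; exact: pMD].
Qed.

Lemma addcl_mulrn X z m : addcl X -> X z -> X (z *+ m).
Proof. case=> X0 XD Xz; elim: m => [|m IH]; rewrite ?mulr0n // mulrS; exact: XD. Qed.

Lemma pM_term X z j : addcl X -> X z -> (p %| 'C(p, j))%N \/ z = 0 ->
  pM X (z *+ 'C(p, j)).
Proof.
move=> hX Xz [dv|->]; last by rewrite mul0rn; apply: pM0.
exists (z *+ ('C(p, j) %/ p)); first exact: addcl_mulrn.
by rewrite -mulrnA divnK.
Qed.

Variable J : {set A}.
Hypothesis hJ : is_ideal circ J.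

Lemma J0 : (0 : A) \in J. Proof. by case: hJ. Qed.
Lemma JB x y : x \in J -> y \in J -> x - y \in J. Proof. by case: hJ => _ H _ _; apply: H. Qed.
Lemma JN x : x \in J -> - x \in J. Proof. by move=> xJ; rewrite -sub0r JB // J0. Qed.
Lemma JD x y : x \in J -> y \in J -> x + y \in J.
Proof. by move=> xJ yJ; rewrite -[y]opprK JB // JN. Qed.
Lemma Jstarl a x : x \in J -> bstar circ a x \in J. Proof. by case: hJ => _ _ H _; apply: H. Qed.
Lemma Jstarr x a : x \in J -> bstar circ x a \in J. Proof. by case: hJ => _ _ _ H; apply: H. Qed.
Lemma Jlam a x : x \in J -> lam circ a x \in J.
Proof. by move=> xJ; rewrite lamE JD // Jstarl. Qed.

Lemma addclJ : addcl (fun x => x \in J).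
Proof. split; [exact: J0 | exact: JD]. Qed.

Definition K' (x : A) := forall a, pM (fun x => x \in J) (bstar circ x a).

Lemma K'_circ x y : K' x -> K' y -> K' (circ x y).
Proof.
move=> Kx Ky a.
have [q qJ eq] := Ky a.
have [q' q'J eq'] := Kx a.
exists (q' + lam circ x q); first by rewrite JD // Jlam.
rewrite bstarE (lamM h) (lamE circ y a) eq (lamD h) (lamMn h) [RHS]mulrnDl -eq' bstarE.
by rewrite addrAC.
Qed.


Lemma iterJ y k x : x \in J -> iter k (bstar circ y) x \in J.
Proof. by move=> xJ; elim: k => [|k IH] //=; apply: Jstarl. Qed.

Lemma K'_cpow y : y \in J -> K' (cpow circ y p).
Proof.
move=> yJ a; rewrite bstarE (lam_cpow h) (binom h y a (leqnn p)) /S big_ord_recl /=.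
rewrite bin0 mulr1n addrC addKr.
apply: pM_sum; first exact: addclJ.
move=> k; rewrite /bump leq0n add1n add0n.
apply: pM_term; first exact: addclJ.
  by rewrite /= Jstarr.
have kp : (k.+1 <= p)%N by [].
case: (ltngtP k.+1 p) => [lt|gt|eqk]; first by left; rewrite prime_dvd_bin.
  by move: kp; rewrite leqNgt gt.
right; rewrite -iterS; apply: (iter_n h pp hcard); rewrite eqk; exact: ltnW (ltnW hpn).
Qed.

Lemma bstarN a x : bstar circ a (- x) = - bstar circ a x.
Proof. by apply/eqP; rewrite -addr_eq0 -(bstarD h) addNr bstar0. Qed.

Lemma BsN k x : x \in Bs circ k -> - x \in Bs circ k.
Proof.
elim: k x => [|k IH] x /=; rewrite !inE; first by move=> /eqP ->; rewrite oppr0.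
move=> /forallP hx; apply/forallP => a; rewrite bstarN; exact: IH.
Qed.

Lemma main k : forall z, z \in J -> z \in Bs circ k -> K' (z *+ p).
Proof.
elim: k => [|k IH] z zJ.
  rewrite inE => /eqP -> a; rewrite mul0rn bstarE (lam0x h) subrr.
  exact: (pM0 addclJ).
move=> zB.
have zs : forall a, bstar circ a z \in Bs circ k.
  by move: zB; rewrite /= inE => /forallP.
pose X := fun x => (x \in J) && (x \in Bs circ k).
have hX : addcl X.
  split; first by rewrite /X J0 Bs0.
  by move=> x y /andP[? ?] /andP[? ?]; rewrite /X JD ?BsD.
have hw : pM X (\sum_(k0 < p) iter k0.+1 (bstar circ z) z *+ 'C(p, k0.+2)).
  apply: pM_sum => // k0; apply: pM_term => //.
    rewrite iterSr; apply/andP; split; first by apply: iterJ; apply: Jstarl.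
    have iterB : forall m x, x \in Bs circ k -> iter m (bstar circ z) x \in Bs circ k.
      by move=> m x xB; elim: m => //= m IHm; apply: Bs_star.
    exact: iterB (zs z).
  case: (ltngtP k0.+2 p) => [lt|gt|eqk].
  - by left; rewrite prime_dvd_bin.
  - by left; rewrite bin_small.
  right; apply: (iter_n h pp hcard); rewrite -ltnS eqk; exact: ltnW hpn.
case: hw => w Xw ew.
have ecp : cpow circ z p = z *+ p + w *+ p.
  rewrite (cpowE h z (leqnn p)) /S big_ord_recl /= bin1 -ew //.
set u := cpow circ z p.
set ub := cinv circ u.
have -> : z *+ p = circ u ((- lam circ ub w) *+ p).
  have circE : forall a t, circ a t = a + lam circ a t by move=> a t; rewrite /lam addrC subrK.
  rewrite circE mulNrn -(lamMn h) -(lamN h) -(lamM h) (cinvP h u).1 (lam0x h) /u ecp.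
  by rewrite addrK.
apply: K'_circ; first exact: K'_cpow.
case/andP: Xw => wJ wB.
apply: IH; first by apply: JN; apply: Jlam.
by apply: BsN; apply: Bs_lam.
Qed.

Lemma pJ_ideal : is_ideal circ [set a *+ p | a in J].
Proof.
split.
- by apply/imsetP; exists 0; rewrite ?mul0rn // J0.
- move=> x y /imsetP[a aJ ->] /imsetP[b bJ ->].
  by apply/imsetP; exists (a - b); rewrite ?mulrnBl // JB.
- move=> a x /imsetP[b bJ ->].
  by apply/imsetP; exists (bstar circ a b); rewrite ?(bstarMn h) // Jstarl.
- move=> x a /imsetP[b bJ ->].
  have := main bJ (Bs_ge h pp hcard b (leqnn n)) a.
  by case=> w wJ ->; apply/imsetP; exists w.
Qed.
End Main.

Theorem corollary14 (i n p : nat) (A : finZmodType) (circ : A -> A -> A)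
  (pp : prime p) (hpn : (n.+1 < p)%N)
  (hA : is_brace circ) (hcard : #|A| = (p ^ n)%N)
  (I : {set A}) (hI : is_ideal circ I) :
  is_ideal circ [set a *+ (p ^ i) | a in I].
Proof.
elim: i => [|i IH].
  rewrite expn0 (_ : [set a *+ 1 | a in I] = I) //.
  apply/setP => x; apply/imsetP/idP => [[a aI ->]|xI]; first by rewrite mulr1n.
  by exists x; rewrite ?mulr1n.
have -> : [set a *+ (p ^ i.+1) | a in I] = [set b *+ p | b in [set a *+ (p ^ i) | a in I]].
  by rewrite -imset_comp; apply: eq_imset => a /=; rewrite expnSr mulrnA.
exact: (pJ_ideal hA pp hcard hpn IH).
Qed.
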